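(* Let all parameters $k_a,k_{epo},V_{max},K_M,V_1,k_{23},k_{32},BSL,k_{in},S_{max},SC_{50},N_P,T_P,N_R,T_R$ be positive, with $V_{max}>k_{epo}$ and $N_P$ even. Consider the autonomous (post-dose) P\'erez-Ruixo system with $C(t)=BSL+A_2(t)/V_1$, $V_e(t)=\frac{S_{max}C(t)}{SC_{50}+C(t)}\frac{N_P}{T_P}$: $$A_1'=-k_aA_1,\quad A_2'=k_{epo}-\frac{V_{max}A_2/V_1}{K_M+A_2/V_1},\quad A_3'=k_{23}A_2-k_{32}A_3,$$ $$P_1'=k_{in}-V_e(t)P_1,\quad P_i'=V_e(t)(P_{i-1}-P_i)\ (2\le i\le N_P/2),\quad P_{N_P/2+1}'=V_e(t)P_{N_P/2}-\tfrac{N_P}{T_P}P_{N_P/2+1},$$ $$P_i'=\tfrac{N_P}{T_P}(P_{i-1}-P_i)\ (N_P/2+2\le i\le N_P),\quad R_1'=\tfrac{N_P}{T_P}P_{N_P}-\tfrac{N_R}{T_R}R_1,\quad R_i'=\tfrac{N_R}{T_R}(R_{i-1}-R_i)\ (2\le i\le N_R).$$ Its homeostatic equilibrium, given by $A_1^*=0$, $A_2^*=\frac{V_1k_{epo}K_M}{V_{max}-k_{epo}}$, $A_3^*=\frac{k_{23}}{k_{32}}A_2^*$, $C^*=BSL+A_2^*/V_1$, $P_1^*=\frac{k_{in}(SC_{50}+C^* )}{S_{max}C^*}\frac{T_P}{N_P}$ (and the corresponding transit compartment values), is locally asymptotically stable.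
   Context: $A_1,A_2,A_3$ are EPO amounts in depot, central and peripheral compartments; $P_i$ erythrocyte progenitor transit compartments; $R_i$ reticulocyte transit compartments. *)

(* Defs.v *)
From Stdlib Require Import Reals Lra Arith.
Open Scope R_scope.

Record params := Params {
  ka : R; kepo : R; Vmax : R; KM : R; V1 : R; k23 : R; k32 : R;
  BSL : R; kin : R; Smax : R; SC50 : R;
  NP : nat; TP : R; NR : nat; TR : R }.

(* State vector: a function nat -> R, of which the coordinates 0 .. dim p - 1
   are meaningful:
     index 0 = A1, 1 = A2, 2 = A3,
     index 2+i = P_i   (1 <= i <= NP),
     index 2+NP+i = R_i (1 <= i <= NR). *)
Definition state := nat -> R.
Definition dim (p : params) : nat := (3 + NP p + NR p)%nat.

Definition hP (p : params) : nat := Nat.div2 (NP p).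
Definition kP (p : params) : R := INR (NP p) / TP p.
Definition kR (p : params) : R := INR (NR p) / TR p.

Definition conc (p : params) (x : state) : R := BSL p + x 1%nat / V1 p.
Definition Ve (p : params) (x : state) : R :=
  Smax p * conc p x / (SC50 p + conc p x) * kP p.

Definition field (p : params) (x : state) (i : nat) : R :=
  if (i =? 0)%nat then - ka p * x 0%nat
  else if (i =? 1)%nat then
    kepo p - Vmax p * (x 1%nat / V1 p) / (KM p + x 1%nat / V1 p)
  else if (i =? 2)%nat then k23 p * x 1%nat - k32 p * x 2%nat
  else if (i =? 3)%nat then kin p - Ve p x * x 3%nat                 (* P_1 *)
  else if (i <=? 2 + hP p)%nat then Ve p x * (x (i - 1)%nat - x i)   (* P_i, 2<=i<=NP/2 *)
  else if (i =? 3 + hP p)%nat then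
    Ve p x * x (2 + hP p)%nat - kP p * x (3 + hP p)%nat              (* P_{NP/2+1} *)
  else if (i <=? 2 + NP p)%nat then kP p * (x (i - 1)%nat - x i)     (* P_i, NP/2+2<=i<=NP *)
  else if (i =? 3 + NP p)%nat then
    kP p * x (2 + NP p)%nat - kR p * x (3 + NP p)%nat                (* R_1 *)
  else if (i <=? 2 + NP p + NR p)%nat then kR p * (x (i - 1)%nat - x i) (* R_i, 2<=i<=NR *)
  else 0.

Definition A2star (p : params) : R := V1 p * kepo p * KM p / (Vmax p - kepo p).
Definition Cstar (p : params) : R := BSL p + A2star p / V1 p.
Definition P1star (p : params) : R :=
  kin p * (SC50 p + Cstar p) / (Smax p * Cstar p) * (TP p / INR (NP p)).

Definition equil (p : params) (i : nat) : R :=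
  if (i =? 0)%nat then 0
  else if (i =? 1)%nat then A2star p
  else if (i =? 2)%nat then k23 p / k32 p * A2star p
  else if (i <=? 2 + hP p)%nat then P1star p                 (* P_1 .. P_{NP/2} *)
  else if (i <=? 2 + NP p)%nat then kin p * (TP p / INR (NP p)) (* P_{NP/2+1} .. P_NP *)
  else if (i <=? 2 + NP p + NR p)%nat then kin p * (TR p / INR (NR p)) (* R_1 .. R_NR *)
  else 0.

Definition near (d : nat) (x y : state) (r : R) : Prop :=
  forall i, (i < d)%nat -> Rabs (x i - y i) < r.

(* Time horizon [0,T) with T = None meaning +infinity. *)
Definition in_horizon (T : option R) (t : R) : Prop :=
  0 <= t /\ match T with Some T' => t < T' | None => True end.

Definition is_solution (d : nat) (F : state -> state) (x : R -> state)
    (T : option R) : Prop :=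
  (forall t, in_horizon T t -> 0 < t ->
     forall i, (i < d)%nat -> derivable_pt_lim (fun s => x s i) t (F (x t) i)) /\
  (forall i, (i < d)%nat -> forall eps, 0 < eps ->
     exists del, 0 < del /\ forall t, 0 <= t < del -> in_horizon T t ->
       Rabs (x t i - x 0 i) < eps).

Definition is_equilibrium (d : nat) (F : state -> state) (e : state) : Prop :=
  forall i, (i < d)%nat -> F e i = 0.

Definition lyap_stable (d : nat) (F : state -> state) (e : state) : Prop :=
  forall eps, 0 < eps -> exists del, 0 < del /\
    forall x T, is_solution d F x T -> near d (x 0) e del ->
      forall t, in_horizon T t -> near d (x t) e eps.

Definition loc_attractive (d : nat) (F : state -> state) (e : state) : Prop :=
  exists eta, 0 < eta /\
    forall x, is_solution d F x None -> near d (x 0) e eta ->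
      forall i, (i < d)%nat -> forall eps, 0 < eps ->
        exists T0, forall t, T0 <= t -> Rabs (x t i - e i) < eps.

Definition loc_asympt_stable (d : nat) (F : state -> state) (e : state) : Prop :=
  lyap_stable d F e /\ loc_attractive d F e.

(* Main.v *)
Require Import Defs.
From Stdlib Require Import Reals Lra Lia Classical.
Open Scope R_scope.

Lemma dcont f t l : derivable_pt_lim f t l -> forall eps, 0 < eps ->
  exists del, 0 < del /\ forall u, Rabs (u - t) < del -> Rabs (f u - f t) < eps.
Proof.
  intros H eps He.
  assert (C : continuity_pt f t) by (apply derivable_continuous_pt; exists l; exact H).
  destruct (C eps He) as [a [Ha Hb]].
  exists a; split; [lra|]. intros u Hu.
  destruct (Req_dec u t) as [->|Hne].
  - rewrite Rminus_diag, Rabs_R0; lra.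
  - apply (Hb u). split; [split; [exact I| auto] | exact Hu].
Qed.

Lemma barrier (y d : R -> R) (t0 t1 c : R) :
  t0 <= t1 ->
  (forall t, t0 < t <= t1 -> derivable_pt_lim y t (d t)) ->
  (forall eps, 0 < eps -> exists del, 0 < del /\
      forall u, t0 <= u < t0 + del -> u <= t1 -> Rabs (y u - y t0) < eps) ->
  y t0 < c ->
  (forall t, t0 < t <= t1 -> y t = c -> d t < 0) ->
  forall t, t0 <= t <= t1 -> y t < c.
Proof.
  intros H01 Hd Hrc H0 Hb.
  set (E := fun s => t0 <= s <= t1 /\ forall u, t0 <= u <= s -> y u < c).
  assert (Hbd : bound E) by (exists t1; intros s [Hs _]; lra).
  assert (HE0 : E t0) by (split; [lra| intros u Hu; replace u with t0 by lra; auto]).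
  destruct (completeness E Hbd (ex_intro _ t0 HE0)) as [m [Hub Hl]].
  assert (Hm0 : t0 <= m) by (apply Hub; exact HE0).
  assert (Hm1 : m <= t1) by (apply Hl; intros s [Hs _]; lra).
  assert (F1 : forall u, t0 <= u < m -> y u < c).
  { intros u Hu. apply NNPP; intro Hn.
    assert (Hup : is_upper_bound E u).
    { intros s [Hs Hs2]. destruct (Rle_dec s u) as [|Hsu]; [auto|].
      exfalso; apply Hn; apply Hs2; lra. }
    specialize (Hl u Hup); lra. }
  assert (F2 : y m < c).
  { destruct (Req_dec m t0) as [->|Hne]; [exact H0|].
    assert (Hmt : t0 < m) by lra.
    destruct (Rlt_le_dec (y m) c) as [|Hge]; [auto|exfalso].
    destruct (Rle_lt_or_eq_dec _ _ Hge) as [Hgt|Heq].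
    - destruct (dcont _ _ _ (Hd m (conj Hmt Hm1)) (y m - c)) as [del [Hdel Hc]]; [lra|].
      set (u := Rmax t0 (m - del/2)).
      assert (Hu1 : t0 <= u) by apply Rmax_l.
      assert (Hu2 : u < m) by (unfold u; apply Rmax_lub_lt; lra).
      assert (Hu3 : Rabs (u - m) < del).
      { assert (m - del/2 <= u) by apply Rmax_r. apply Rabs_def1; lra. }
      specialize (Hc u Hu3). specialize (F1 u (conj Hu1 Hu2)).
      apply Rabs_def2 in Hc. lra.
    - assert (Hdm : d m < 0) by (apply Hb; [lra| auto]).
      destruct (Hd m (conj Hmt Hm1) (- d m / 2)) as [del Hdel]; [lra|].
      set (h := - Rmin (del/2) ((m - t0)/2)).
      assert (Hh1 : 0 < Rmin (del/2) ((m - t0)/2)) by (apply Rmin_pos; pose proof (cond_pos del); lra).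
      assert (Hh2 : Rmin (del/2) ((m - t0)/2) <= del/2) by apply Rmin_l.
      assert (Hh3 : Rmin (del/2) ((m - t0)/2) <= (m-t0)/2) by apply Rmin_r.
      assert (Hhn : h <> 0) by (unfold h; lra).
      assert (Hha : Rabs h < del) by (unfold h; rewrite Rabs_Ropp, Rabs_pos_eq; pose proof (cond_pos del); lra).
      specialize (Hdel h Hhn Hha). apply Rabs_def2 in Hdel.
      assert (Hq : (y (m + h) - y m) / h < d m / 2) by lra.
      assert (Hy : y (m + h) < c) by (apply F1; unfold h; lra).
      assert (Hhneg : h < 0) by (unfold h; lra).
      assert (Hq2 : (y (m + h) - y m) / h > 0).
      { unfold Rdiv. replace ((y (m+h) - y m) * / h) with ((y m - y (m+h)) * / (-h)) by (field; auto).
        apply Rmult_lt_0_compat; [lra| apply Rinv_0_lt_compat; lra]. }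
      lra. }
  assert (Hrm : forall eps, 0 < eps -> exists del, 0 < del /\
      forall u, m <= u < m + del -> u <= t1 -> Rabs (y u - y m) < eps).
  { intros eps He. destruct (Req_dec m t0) as [->|Hne]; [apply Hrc; auto|].
    destruct (dcont _ _ _ (Hd m (conj (ltac:(lra) : t0 < m) Hm1)) eps He) as [del [Hdel Hc]].
    exists del; split; auto. intros u Hu _. apply Hc. apply Rabs_def1; lra. }
  intros t Ht.
  destruct (Rlt_le_dec t m) as [Htm|Hmt]; [apply F1; lra|].
  destruct (Req_dec t m) as [->|Hne]; [exact F2|].
  exfalso.
  destruct (Hrm (c - y m)) as [del [Hdel Hc]]; [lra|].
  set (s := Rmin (m + del/2) t1).
  assert (Hs1 : s <= m + del/2) by apply Rmin_l.
  assert (Hs2 : s <= t1) by apply Rmin_r.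
  assert (Hs3 : m < s) by (unfold s; apply Rmin_glb_lt; lra).
  assert (HEs : E s).
  { split; [lra|]. intros u Hu. destruct (Rlt_le_dec u m); [apply F1; lra|].
    specialize (Hc u ltac:(lra) ltac:(lra)). apply Rabs_def2 in Hc. lra. }
  specialize (Hub s HEs). lra.
Qed.

Lemma dopp y x l : derivable_pt_lim y x l -> derivable_pt_lim (fun t => - y t) x (- l).
Proof. intros H. apply (derivable_pt_lim_opp y). exact H. Qed.

Lemma dlin y x l a b : derivable_pt_lim y x l ->
  derivable_pt_lim (fun t => y t + a*t + b) x (l + a).
Proof.
  intros H eps He. destruct (H eps He) as [del Hd]. exists del. intros h Hh Ha.
  replace ((y (x+h) + a*(x+h) + b - (y x + a*x + b))/h - (l + a))
    with ((y (x+h) - y x)/h - l) by (field; auto). auto.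
Qed.

Lemma hor_le T t u : in_horizon T t -> 0 <= u <= t -> in_horizon T u.
Proof. destruct T; unfold in_horizon; intros; lra. Qed.

Lemma bound_horizon (y d : R -> R) (T : option R) (c : R) :
  (forall t, in_horizon T t -> 0 < t -> derivable_pt_lim y t (d t)) ->
  (forall eps, 0 < eps -> exists del, 0 < del /\
     forall t, 0 <= t < del -> in_horizon T t -> Rabs (y t - y 0) < eps) ->
  Rabs (y 0) < c ->
  (forall t, in_horizon T t -> 0 < t -> y t = c -> d t < 0) ->
  (forall t, in_horizon T t -> 0 < t -> y t = - c -> 0 < d t) ->
  forall t, in_horizon T t -> Rabs (y t) < c.
Proof.
  intros Hd Hrc H0 Hp Hn t Ht.
  assert (Ht0 : 0 <= t) by (destruct Ht; lra).
  apply Rabs_def2 in H0 as [H0a H0b].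
  apply Rabs_def1.
  - apply (barrier y d 0 t c); [lra| | | lra | | lra].
    + intros s Hs. apply Hd; [apply (hor_le T t s); auto; lra| lra].
    + intros eps He. destruct (Hrc eps He) as [del [Hdel Hc]]. exists del; split; auto.
      intros u Hu Hut. apply Hc; [lra| apply (hor_le T t u); auto; lra].
    + intros s Hs Hys. apply Hp; [apply (hor_le T t s); auto; lra| lra | lra].
  - cut (- y t < c); [lra|].
    apply (barrier (fun s => - y s) (fun s => - d s) 0 t c); [lra| | | lra | | lra].
    + intros s Hs. apply dopp. apply Hd; [apply (hor_le T t s); auto; lra| lra].
    + intros eps He. destruct (Hrc eps He) as [del [Hdel Hc]]. exists del; split; auto.
      intros u Hu Hut. replace (- y u - - y 0) with (-(y u - y 0)) by ring.
      rewrite Rabs_Ropp. apply Hc; [lra| apply (hor_le T t u); auto; lra].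
    + intros s Hs Hys. cut (0 < d s); [lra|]. apply Hn; [apply (hor_le T t s); auto; lra| lra | lra].
Qed.

Lemma reach (y d : R -> R) (T1 eps eta : R) : 0 < T1 -> 0 < eta ->
  (forall t, T1 <= t -> derivable_pt_lim y t (d t)) ->
  (forall t, T1 <= t -> eps <= y t -> d t <= - eta) ->
  exists T2, forall t, T2 <= t -> y t < eps.
Proof.
  intros HT1 Heta Hd Hs.
  set (tau := (Rabs (y T1) + Rabs eps + 1) * 2 / eta).
  assert (Htau : 0 < tau).
  { unfold tau. apply Rmult_lt_0_compat; [|apply Rinv_0_lt_compat; auto].
    pose proof (Rabs_pos (y T1)); pose proof (Rabs_pos eps); lra. }
  exists (T1 + tau).
  destruct (classic (exists s, T1 <= s <= T1 + tau /\ y s < eps)) as [[s [Hs1 Hs2]]|Hno].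
  - intros t Ht.
    apply (barrier y d s t eps); [lra| | | lra | | lra].
    + intros u Hu; apply Hd; lra.
    + intros e He. destruct (dcont _ _ _ (Hd s ltac:(lra)) e He) as [del [Hdel Hc]].
      exists del; split; auto. intros u Hu _. apply Hc. apply Rabs_def1; lra.
    + intros u Hu Hyu. pose proof (Hs u ltac:(lra) ltac:(lra)). lra.
  - exfalso.
    assert (Hall : forall s, T1 <= s <= T1 + tau -> eps <= y s).
    { intros s Hs0. destruct (Rle_lt_dec eps (y s)); auto. exfalso; apply Hno; exists s; auto. }
    assert (HB : y (T1 + tau) + (eta/2) * (T1 + tau) + (- (eta/2) * T1) < y T1 + 1).
    { apply (barrier (fun t => y t + (eta/2) * t + (- (eta/2) * T1))
                     (fun t => d t + eta/2) T1 (T1 + tau)); [lra| | | lra | | lra].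
      - intros u Hu. apply dlin. apply Hd; lra.
      - intros e He. destruct (dcont _ _ _ (dlin y T1 (d T1) (eta/2) (- (eta/2)*T1) (Hd T1 ltac:(lra))) e He)
          as [del [Hdel Hc]].
        exists del; split; auto. intros u Hu _. apply Hc. apply Rabs_def1; lra.
      - intros u Hu _. pose proof (Hs u ltac:(lra) (Hall u ltac:(lra))). lra. }
    assert (Heq : eta / 2 * tau = Rabs (y T1) + Rabs eps + 1) by (unfold tau; field; lra).
    pose proof (Hall (T1 + tau) ltac:(lra)).
    pose proof (Rle_abs (y T1)). pose proof (Rle_abs (- eps)). rewrite Rabs_Ropp in *.
    lra.
Qed.

Lemma reach_abs (y d : R -> R) (T1 eps eta : R) : 0 < T1 -> 0 < eta ->
  (forall t, T1 <= t -> derivable_pt_lim y t (d t)) ->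
  (forall t, T1 <= t -> eps <= y t -> d t <= - eta) ->
  (forall t, T1 <= t -> y t <= - eps -> eta <= d t) ->
  exists T2, forall t, T2 <= t -> Rabs (y t) < eps.
Proof.
  intros HT1 Heta Hd Hp Hn.
  destruct (reach y d T1 eps eta) as [Ta Ha]; auto.
  destruct (reach (fun t => - y t) (fun t => - d t) T1 eps eta) as [Tb Hb]; auto.
  - intros t Ht; apply dopp; auto.
  - intros t Ht Hy. pose proof (Hn t Ht ltac:(lra)). lra.
  - exists (Rmax Ta Tb). intros t Ht.
    pose proof (Rmax_l Ta Tb); pose proof (Rmax_r Ta Tb).
    specialize (Ha t ltac:(lra)); specialize (Hb t ltac:(lra)). apply Rabs_def1; lra.
Qed.

Lemma frac_le a b c d : 0 < b -> 0 < d -> a * d <= c * b -> a / b <= c / d.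
Proof.
  intros Hb Hd H.
  assert (E : c / d - a / b = (c * b - a * d) / (b * d)) by (field; lra).
  assert (0 <= (c * b - a * d) / (b * d)).
  { unfold Rdiv. apply Rmult_le_pos; [lra| left; apply Rinv_0_lt_compat; nra]. }
  lra.
Qed.

Lemma abs_le u a : Rabs u <= a -> - a <= u <= a.
Proof. unfold Rabs; destruct (Rcase_abs u); intros; lra. Qed.

Ltac dec := repeat (first [
   match goal with |- context [Nat.eqb ?a ?b] =>
     destruct (Nat.eqb_spec a b); try (exfalso; lia) end
 | match goal with |- context [Nat.leb ?a ?b] =>
     destruct (Nat.leb_spec a b); try (exfalso; lia) end ]; cbv iota).

Section Model.
Variable p : params.
Hypotheses (Hka : 0 < ka p) (Hkepo : 0 < kepo p) (HVmax : 0 < Vmax p) (HKM : 0 < KM p)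
  (HV1 : 0 < V1 p) (Hk23 : 0 < k23 p) (Hk32 : 0 < k32 p) (HBSL : 0 < BSL p)
  (Hkin : 0 < kin p) (HSmax : 0 < Smax p) (HSC50 : 0 < SC50 p) (HNP : (0 < NP p)%nat)
  (HTP : 0 < TP p) (HNR : (0 < NR p)%nat) (HTR : 0 < TR p) (HVk : Vmax p > kepo p)
  (Hev : Nat.even (NP p) = true).

Lemma hP_bounds : (1 <= hP p)%nat /\ (hP p < NP p)%nat.
Proof.
  apply Nat.even_spec in Hev. destruct Hev as [m Hm]. unfold hP. rewrite Hm.
  rewrite Nat.div2_double. lia.
Qed.

Lemma INP_pos : 0 < INR (NP p). Proof. apply lt_0_INR; lia. Qed.
Lemma INR_pos : 0 < INR (NR p). Proof. apply lt_0_INR; lia. Qed.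
Lemma kP_pos : 0 < kP p. Proof. unfold kP; apply Rdiv_lt_0_compat; [apply INP_pos| auto]. Qed.
Lemma kR_pos : 0 < kR p. Proof. unfold kR; apply Rdiv_lt_0_compat; [apply INR_pos| auto]. Qed.

Definition ws := kepo p * KM p / (Vmax p - kepo p).
Lemma ws_pos : 0 < ws. Proof. unfold ws; apply Rdiv_lt_0_compat; nra. Qed.
Lemma A2_eq : A2star p = V1 p * ws. Proof. unfold A2star, ws. field. lra. Qed.
Lemma A2_pos : 0 < A2star p. Proof. rewrite A2_eq. pose proof ws_pos. nra. Qed.
Lemma kepo_eq : kepo p = Vmax p * ws / (KM p + ws).
Proof. pose proof ws_pos.
  assert (E : KM p + ws = Vmax p * KM p / (Vmax p - kepo p)) by (unfold ws; field; lra).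
  rewrite E. unfold ws. field. split; lra. Qed.
Lemma Cstar_eq : Cstar p = BSL p + ws.
Proof. unfold Cstar. rewrite A2_eq. field. lra. Qed.
Lemma Cstar_pos : 0 < Cstar p. Proof. rewrite Cstar_eq; pose proof ws_pos; lra. Qed.

Definition Vs := Smax p * Cstar p / (SC50 p + Cstar p) * kP p.
Lemma P1_pos : 0 < P1star p.
Proof. pose proof Cstar_pos. pose proof INP_pos. unfold P1star.
  apply Rmult_lt_0_compat; apply Rdiv_lt_0_compat; nra. Qed.
Lemma Vs_P1 : Vs * P1star p = kin p.
Proof. pose proof Cstar_pos. pose proof INP_pos. unfold Vs, P1star, kP. field. lra. Qed.
Definition Qp := kin p * (TP p / INR (NP p)).
Definition Qr := kin p * (TR p / INR (NR p)).
Lemma kP_Q : kP p * Qp = kin p.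
Proof. pose proof INP_pos. unfold kP, Qp. field. lra. Qed.
Lemma kR_Q : kR p * Qr = kin p.
Proof. pose proof INR_pos. unfold kR, Qr. field. lra. Qed.

Definition region (x : state) := Rabs (x 1%nat - A2star p) <= A2star p.

Definition v0 := Smax p * BSL p / (SC50 p + BSL p + 2 * ws) * kP p.
Definition Lc := Smax p * kP p / (SC50 p * V1 p).
Definition G := k23 p + Smax p * kP p + P1star p * Lc + kP p + kR p.
Definition beta := Rmin (Rmin (k32 p) v0) (Rmin (kP p) (kR p)).
Definition beta1 := Vmax p * KM p / (V1 p * (KM p + 2 * ws) * (KM p + ws)).

Lemma region_w x : region x -> 0 <= x 1%nat / V1 p <= 2 * ws.
Proof.
  unfold region; intros H. apply abs_le in H. pose proof A2_eq. pose proof ws_pos.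
  split.
  - apply Rmult_le_pos; [lra| left; apply Rinv_0_lt_compat; auto].
  - apply Rmult_le_reg_l with (V1 p); auto. field_simplify; nra.
Qed.

Lemma Ve_bounds x : region x ->
  v0 <= Ve p x <= Smax p * kP p /\ Rabs (Ve p x - Vs) <= Lc * Rabs (x 1%nat - A2star p).
Proof.
  intros Hr. pose proof (region_w x Hr) as [Hw1 Hw2]. pose proof kP_pos. pose proof ws_pos.
  pose proof Cstar_pos.
  set (w := x 1%nat / V1 p) in *.
  assert (HC : conc p x = BSL p + w) by reflexivity.
  unfold Ve, v0. rewrite HC.
  split; [split|].
  - apply Rmult_le_compat_r; [lra|]. apply frac_le; try lra.
    assert (0 <= Smax p * (2 * BSL p * ws + w * SC50 p + 2 * w * ws)).
    { apply Rmult_le_pos; [lra|]. assert (0 <= BSL p * ws) by nra. assert (0 <= w * SC50 p) by nra.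
      assert (0 <= w * ws) by nra. lra. }
    nra.
  - apply Rmult_le_compat_r; [lra|].
    replace (Smax p) with (Smax p / 1) at 2 by field. apply frac_le; nra.
  - set (C := BSL p + w).
    assert (Hz : x 1%nat - A2star p = V1 p * (C - Cstar p)).
    { unfold C, w. rewrite Cstar_eq, A2_eq. field. lra. }
    assert (E : Smax p * C / (SC50 p + C) * kP p - Vs =
                Smax p * kP p * SC50 p * (C - Cstar p) / ((SC50 p + C) * (SC50 p + Cstar p))).
    { unfold Vs. field. unfold C; split; lra. }
    rewrite E, Hz. unfold Lc.
    rewrite Rabs_mult, (Rabs_pos_eq (V1 p)) by lra.
    unfold Rdiv. rewrite Rabs_mult, Rabs_mult, Rabs_inv.
    rewrite (Rabs_pos_eq (Smax p * kP p * SC50 p)) by (apply Rmult_le_pos; nra).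
    rewrite (Rabs_pos_eq ((SC50 p + C) * (SC50 p + Cstar p))) by (unfold C; nra).
    set (a := Rabs (C - Cstar p)). assert (0 <= a) by apply Rabs_pos.
    assert (Hd : SC50 p * SC50 p <= (SC50 p + C) * (SC50 p + Cstar p)) by (unfold C; nra).
    assert (Hi : / ((SC50 p + C) * (SC50 p + Cstar p)) <= / (SC50 p * SC50 p)).
    { apply Rinv_le_contravar; nra. }
    assert (E2 : Smax p * kP p * / (SC50 p * V1 p) * (V1 p * a) =
                 Smax p * kP p * SC50 p * a * / (SC50 p * SC50 p)) by (field; lra).
    rewrite E2.
    replace (Smax p * kP p * SC50 p * a * / ((SC50 p + C) * (SC50 p + Cstar p)))
      with (Smax p * kP p * SC50 p * a * / ((SC50 p + C) * (SC50 p + Cstar p))) by ring.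
    apply Rmult_le_compat_l; [|exact Hi].
    clearbody a. assert (0 <= Smax p * kP p) by nra. assert (0 <= Smax p * kP p * SC50 p) by nra. nra.
Qed.

Lemma key1 x : region x -> exists b, field p x 1 = - b * (x 1%nat - equil p 1) /\ beta1 <= b.
Proof.
  intros Hr. pose proof (region_w x Hr) as [Hw1 Hw2]. pose proof ws_pos.
  set (w := x 1%nat / V1 p) in *.
  exists (Vmax p * KM p / (V1 p * (KM p + w) * (KM p + ws))).
  split.
  - unfold field, equil; simpl. fold w. rewrite kepo_eq, A2_eq.
    replace (x 1%nat) with (V1 p * w) by (unfold w; field; lra).
    field. repeat split; lra.
  - unfold beta1. apply frac_le.
    + apply Rmult_lt_0_compat; [|lra]. apply Rmult_lt_0_compat; lra.
    + apply Rmult_lt_0_compat; [|lra]. apply Rmult_lt_0_compat; lra.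
    + apply Rmult_le_compat_l; [nra|].
      apply Rmult_le_compat_r; [lra|]. apply Rmult_le_compat_l; lra.
Qed.

Definition KEYP x i := exists b f, field p x i = - b * (x i - equil p i) + f /\ beta <= b /\
  Rabs f <= G * (Rabs (x 1%nat - equil p 1) + Rabs (x (i-1)%nat - equil p (i-1))).

Lemma beta_k32 : beta <= k32 p.
Proof. unfold beta. pose proof (Rmin_l (Rmin (k32 p) v0) (Rmin (kP p) (kR p))). pose proof (Rmin_l (k32 p) v0). lra. Qed.
Lemma beta_v0 : beta <= v0.
Proof. unfold beta. pose proof (Rmin_l (Rmin (k32 p) v0) (Rmin (kP p) (kR p))). pose proof (Rmin_r (k32 p) v0). lra. Qed.
Lemma beta_kP : beta <= kP p.
Proof. unfold beta. pose proof (Rmin_r (Rmin (k32 p) v0) (Rmin (kP p) (kR p))). pose proof (Rmin_l (kP p) (kR p)). lra. Qed.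
Lemma beta_kR : beta <= kR p.
Proof. unfold beta. pose proof (Rmin_r (Rmin (k32 p) v0) (Rmin (kP p) (kR p))). pose proof (Rmin_r (kP p) (kR p)). lra. Qed.
Lemma Lc_pos : 0 < Lc.
Proof. pose proof kP_pos. unfold Lc. apply Rdiv_lt_0_compat; nra. Qed.
Lemma v0_pos : 0 < v0.
Proof. pose proof kP_pos. pose proof ws_pos. unfold v0. apply Rmult_lt_0_compat; [|lra]. apply Rdiv_lt_0_compat; nra. Qed.
Lemma beta_pos : 0 < beta.
Proof. pose proof kP_pos; pose proof kR_pos; pose proof v0_pos. unfold beta.
  apply Rmin_glb_lt; apply Rmin_glb_lt; lra. Qed.
Lemma G_facts : k23 p <= G /\ Smax p * kP p <= G /\ P1star p * Lc <= G /\ kP p <= G /\ kR p <= G.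
Proof. pose proof kP_pos; pose proof kR_pos; pose proof Lc_pos; pose proof P1_pos.
  assert (0 <= Smax p * kP p) by nra. assert (0 <= P1star p * Lc) by nra. unfold G. lra. Qed.

Lemma Gbound f a b K : Rabs f <= K * a -> K <= G -> 0 <= a -> 0 <= b -> 0 <= K -> Rabs f <= G * (a + b).
Proof. intros. assert (K * a <= G * a) by (apply Rmult_le_compat_r; lra).
  assert (0 <= G * b) by (apply Rmult_le_pos; lra). lra. Qed.
Lemma Gbound2 f a b K : Rabs f <= K * b -> K <= G -> 0 <= a -> 0 <= b -> 0 <= K -> Rabs f <= G * (a + b).
Proof. intros. rewrite Rplus_comm. apply (Gbound f b a K); auto. Qed.

Lemma eq1 : equil p 1 = A2star p. Proof. reflexivity. Qed.

Lemma key2 x : KEYP x 2.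
Proof.
  pose proof G_facts as [G1 _]. pose proof beta_k32. pose proof A2_pos.
  unfold KEYP. exists (k32 p), (k23 p * (x 1%nat - A2star p)).
  unfold field, equil; simpl. split; [field; lra| split; [lra|]].
  apply (Gbound _ _ _ (k23 p)); auto using Rabs_pos; try lra.
  rewrite Rabs_mult, (Rabs_pos_eq (k23 p)) by lra. lra.
Qed.

Lemma ve_abs x y : region x -> Rabs (Ve p x * y) <= Smax p * kP p * Rabs y.
Proof. intros Hr. pose proof (Ve_bounds x Hr) as [[A B] _]. pose proof v0_pos.
  rewrite Rabs_mult, (Rabs_pos_eq (Ve p x)) by lra. pose proof (Rabs_pos y). nra. Qed.
Lemma vd_abs x : region x -> Rabs ((Ve p x - Vs) * P1star p) <= P1star p * Lc * Rabs (x 1%nat - A2star p).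
Proof. intros Hr. pose proof (Ve_bounds x Hr) as [_ B]. pose proof P1_pos.
  rewrite Rabs_mult, (Rabs_pos_eq (P1star p)) by lra. nra. Qed.

Lemma key3 x : region x -> KEYP x 3.
Proof.
  intros Hr. pose proof hP_bounds as [h1 h2].
  pose proof G_facts as [_ [_ [G3 _]]]. pose proof beta_v0. pose proof (Ve_bounds x Hr) as [[A B] _].
  unfold KEYP. exists (Ve p x), (- ((Ve p x - Vs) * P1star p)).
  rewrite eq1. unfold field, equil. dec.
  split; [pose proof Vs_P1; lra| split; [lra|]].
  rewrite Rabs_Ropp. pose proof Lc_pos. pose proof P1_pos.
  apply (Gbound _ _ _ (P1star p * Lc)); auto using vd_abs, Rabs_pos; nra.
Qed.

Lemma keyPc x i : region x -> (4 <= i <= 2 + hP p)%nat -> KEYP x i.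
Proof.
  intros Hr Hi. pose proof hP_bounds as [h1 h2].
  pose proof G_facts as [_ [G2 _]]. pose proof beta_v0. pose proof (Ve_bounds x Hr) as [[A B] _].
  pose proof v0_pos. pose proof kP_pos.
  unfold KEYP. exists (Ve p x), (Ve p x * (x (i-1)%nat - P1star p)).
  rewrite eq1. unfold field, equil. dec.
  split; [ring| split; [lra|]].
  apply (Gbound2 _ _ _ (Smax p * kP p)); auto using ve_abs, Rabs_pos; nra.
Qed.

Lemma keyPh x : region x -> KEYP x (3 + hP p).
Proof.
  intros Hr. pose proof hP_bounds as [h1 h2].
  pose proof G_facts as [_ [G2 [G3 _]]]. pose proof beta_kP. pose proof (Ve_bounds x Hr) as [[A B] _].
  pose proof v0_pos. pose proof kP_pos. pose proof Lc_pos. pose proof P1_pos.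
  unfold KEYP. replace (3 + hP p - 1)%nat with (2 + hP p)%nat by lia.
  exists (kP p), (Ve p x * (x (2 + hP p)%nat - P1star p) + (Ve p x - Vs) * P1star p).
  rewrite eq1. unfold field, equil. dec.
  pose proof Vs_P1. pose proof kP_Q. unfold Qp in *.
  split; [lra| split; [lra|]].
  eapply Rle_trans; [apply Rabs_triang|].
  pose proof (ve_abs x (x (2 + hP p)%nat - P1star p) Hr). pose proof (vd_abs x Hr).
  pose proof (Rabs_pos (x 1%nat - A2star p)). pose proof (Rabs_pos (x (2 + hP p)%nat - P1star p)).
  set (a := Rabs (x 1%nat - A2star p)) in *. set (b := Rabs (x (2 + hP p)%nat - P1star p)) in *.
  assert (0 <= Smax p * kP p) by nra. assert (0 <= P1star p * Lc) by nra.
  assert (0 <= k23 p * (a + b)) by nra. assert (0 <= Smax p * kP p * a) by nra.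
  assert (0 <= P1star p * Lc * b) by nra. assert (0 <= kP p * (a + b)) by nra.
  assert (0 <= kR p * (a + b)) by (pose proof kR_pos; nra).
  unfold G. lra.
Qed.

Lemma keyPt x i : region x -> (4 + hP p <= i <= 2 + NP p)%nat -> KEYP x i.
Proof.
  intros Hr Hi. pose proof hP_bounds as [h1 h2].
  pose proof G_facts as [_ [_ [_ [G4 _]]]]. pose proof beta_kP. pose proof kP_pos.
  unfold KEYP. exists (kP p), (kP p * (x (i-1)%nat - Qp)).
  rewrite eq1. unfold field, equil. dec. unfold Qp.
  split; [ring| split; [lra|]].
  apply (Gbound2 _ _ _ (kP p)); auto using Rabs_pos; try lra.
  rewrite Rabs_mult, (Rabs_pos_eq (kP p)) by lra. lra.
Qed.

Lemma keyR1 x : region x -> KEYP x (3 + NP p).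
Proof.
  intros Hr. pose proof hP_bounds as [h1 h2].
  pose proof G_facts as [_ [_ [_ [G4 _]]]]. pose proof beta_kR. pose proof kP_pos. pose proof kR_pos.
  unfold KEYP. replace (3 + NP p - 1)%nat with (2 + NP p)%nat by lia.
  exists (kR p), (kP p * (x (2 + NP p)%nat - Qp)).
  rewrite eq1. unfold field, equil. dec.
  pose proof kP_Q. pose proof kR_Q. unfold Qp, Qr in *.
  split; [lra| split; [lra|]].
  apply (Gbound2 _ _ _ (kP p)); auto using Rabs_pos; try lra.
  rewrite Rabs_mult, (Rabs_pos_eq (kP p)) by lra. lra.
Qed.

Lemma keyRc x i : region x -> (4 + NP p <= i <= 2 + NP p + NR p)%nat -> KEYP x i.
Proof.
  intros Hr Hi. pose proof hP_bounds as [h1 h2].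
  pose proof G_facts as [_ [_ [_ [_ G5]]]]. pose proof beta_kR. pose proof kR_pos.
  unfold KEYP. exists (kR p), (kR p * (x (i-1)%nat - Qr)).
  rewrite eq1. unfold field, equil. dec. unfold Qr.
  split; [ring| split; [lra|]].
  apply (Gbound2 _ _ _ (kR p)); auto using Rabs_pos; try lra.
  rewrite Rabs_mult, (Rabs_pos_eq (kR p)) by lra. lra.
Qed.

Lemma key x i : region x -> (2 <= i < dim p)%nat -> KEYP x i.
Proof.
  intros Hr Hi. unfold dim in Hi. pose proof hP_bounds as [h1 h2].
  destruct (Nat.eq_dec i 2) as [->|]; [apply key2|].
  destruct (Nat.eq_dec i 3) as [->|]; [apply key3; auto|].
  destruct (Nat.le_gt_cases i (2 + hP p)); [apply keyPc; auto; lia|].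
  destruct (Nat.eq_dec i (3 + hP p)) as [->|]; [apply keyPh; auto|].
  destruct (Nat.le_gt_cases i (2 + NP p)); [apply keyPt; auto; lia|].
  destruct (Nat.eq_dec i (3 + NP p)) as [->|]; [apply keyR1; auto|].
  apply keyRc; auto; lia.
Qed.

Lemma beta1_pos : 0 < beta1.
Proof. pose proof ws_pos. unfold beta1. apply Rdiv_lt_0_compat; [nra|].
  apply Rmult_lt_0_compat; [apply Rmult_lt_0_compat|]; lra. Qed.
Lemma G_pos : 0 < G.
Proof. pose proof G_facts as [G1 _]. lra. Qed.

Definition Kc := 2 * G / beta + 1.
Lemma Kc_ge1 : 1 <= Kc.
Proof. pose proof G_pos; pose proof beta_pos. unfold Kc.
  assert (0 < 2 * G / beta) by (apply Rdiv_lt_0_compat; lra). lra. Qed.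
Lemma Kc_beta : beta * Kc = 2 * G + beta.
Proof. pose proof beta_pos. unfold Kc. field. lra. Qed.
Definition delta eps := Rmin eps (A2star p) / Kc ^ dim p.
Lemma Kpow_pos n : 0 < Kc ^ n.
Proof. apply pow_lt. pose proof Kc_ge1. lra. Qed.
Lemma delta_pos eps : 0 < eps -> 0 < delta eps.
Proof. intros. pose proof A2_pos. unfold delta. apply Rdiv_lt_0_compat; [|apply Kpow_pos].
  apply Rmin_glb_lt; lra. Qed.
Lemma delta_le eps i : 0 < eps -> (i <= dim p)%nat -> Kc ^ i * delta eps <= Rmin eps (A2star p).
Proof.
  intros Heps Hi. pose proof (Rle_pow Kc i (dim p) Kc_ge1 Hi). pose proof (Kpow_pos (dim p)).
  pose proof (Kpow_pos i). unfold delta.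
  assert (E : Kc ^ i * (Rmin eps (A2star p) / Kc ^ dim p) = Rmin eps (A2star p) * (Kc ^ i / Kc ^ dim p)) by (field; lra).
  rewrite E. destruct (Rle_dec 0 (Rmin eps (A2star p))) as [Hm|Hm].
  - replace (Rmin eps (A2star p)) with (Rmin eps (A2star p) * 1) at 2 by ring.
    apply Rmult_le_compat_l; auto. apply Rmult_le_reg_r with (Kc ^ dim p); auto.
    unfold Rdiv; rewrite Rmult_assoc, Rinv_l; lra.
  - exfalso; apply Hm. pose proof A2_pos. apply Rmin_glb; lra.
Qed.

Lemma ydiff x T i t : is_solution (dim p) (field p) x T -> (i < dim p)%nat ->
  in_horizon T t -> 0 < t -> derivable_pt_lim (fun s => x s i - equil p i) t (field p (x t) i).
Proof.
  intros [Hd _] Hi Ht Hp.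
  replace (field p (x t) i) with (field p (x t) i - 0) by ring.
  apply (derivable_pt_lim_minus (fun s => x s i) (fun _ => equil p i)).
  - apply Hd; auto.
  - apply derivable_pt_lim_const.
Qed.

Lemma yrc x T i : is_solution (dim p) (field p) x T -> (i < dim p)%nat ->
  forall eps, 0 < eps -> exists del, 0 < del /\
     forall t, 0 <= t < del -> in_horizon T t ->
       Rabs ((x t i - equil p i) - (x 0 i - equil p i)) < eps.
Proof.
  intros [_ Hc] Hi eps He. destruct (Hc i Hi eps He) as [del [Hdel H]].
  exists del; split; auto. intros t Ht Hh.
  replace ((x t i - equil p i) - (x 0 i - equil p i)) with (x t i - x 0 i) by ring. auto.
Qed.

Lemma dim_ge3 : (3 <= dim p)%nat.
Proof. unfold dim; lia. Qed.

Lemma field0 x : field p x 0 = - ka p * (x 0%nat - equil p 0).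
Proof. unfold field, equil; simpl. ring. Qed.

Lemma region_of x c : Rabs (x 1%nat - equil p 1) <= c -> c <= A2star p -> region x.
Proof. unfold region. rewrite eq1. lra. Qed.

Lemma Kd_le eps : 0 < eps -> Kc * delta eps <= A2star p.
Proof. intros He. pose proof (delta_le eps 1 He). pose proof dim_ge3.
  assert (Kc ^ 1 = Kc) by (simpl; ring). rewrite H1 in H. pose proof (Rmin_r eps (A2star p)).
  assert (Kc * delta eps <= Rmin eps (A2star p)) by (apply H; lia). lra. Qed.

Lemma z_bound eps x T : 0 < eps -> is_solution (dim p) (field p) x T ->
  near (dim p) (x 0) (equil p) (delta eps) ->
  forall t, in_horizon T t -> Rabs (x t 1%nat - equil p 1) < Kc * delta eps.
Proof.
  intros He Hs Hn. pose proof dim_ge3. pose proof (delta_pos eps He). pose proof Kc_ge1.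
  pose proof (Kd_le eps He). pose proof beta1_pos.
  assert (0 < Kc * delta eps) by nra.
  apply (bound_horizon (fun s => x s 1%nat - equil p 1) (fun s => field p (x s) 1) T).
  - intros; eapply ydiff; eauto; lia.
  - apply yrc; auto; lia.
  - assert (Rabs (x 0 1%nat - equil p 1) < delta eps) by (apply Hn; lia). nra.
  - intros t Ht Htp Hy.
    destruct (key1 (x t)) as [b [Hb1 Hb2]].
    + apply (region_of _ (Kc * delta eps)); auto. rewrite Hy, Rabs_pos_eq; nra.
    + rewrite Hb1, Hy. nra.
  - intros t Ht Htp Hy.
    destruct (key1 (x t)) as [b [Hb1 Hb2]].
    + apply (region_of _ (Kc * delta eps)); auto. rewrite Hy, Rabs_Ropp, Rabs_pos_eq; nra.
    + rewrite Hb1, Hy. nra.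
Qed.

Lemma all_bound eps x T : 0 < eps -> is_solution (dim p) (field p) x T ->
  near (dim p) (x 0) (equil p) (delta eps) ->
  forall i, (i < dim p)%nat -> forall t, in_horizon T t -> Rabs (x t i - equil p i) < Kc ^ i * delta eps.
Proof.
  intros He Hs Hn. pose proof dim_ge3. pose proof (delta_pos eps He). pose proof Kc_ge1.
  pose proof (Kd_le eps He). pose proof G_pos. pose proof beta_pos. pose proof Kc_beta.
  induction i as [|i IH]; intros Hi.
  - simpl. rewrite Rmult_1_l.
    apply (bound_horizon (fun s => x s 0%nat - equil p 0) (fun s => field p (x s) 0) T).
    + intros; eapply ydiff; eauto.
    + apply yrc; auto.
    + apply Hn; auto.
    + intros t Ht Htp Hy. rewrite field0, Hy. nra.
    + intros t Ht Htp Hy. rewrite field0, Hy. nra.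
  - destruct i as [|i].
    + replace (Kc ^ 1 * delta eps) with (Kc * delta eps) by (simpl; ring).
      apply z_bound; auto.
    + assert (IH' := IH ltac:(lia)).
      assert (Hz := z_bound eps x T He Hs Hn).
      set (P := Kc ^ S i * delta eps) in *.
      assert (HP : 0 < P) by (unfold P; pose proof (Kpow_pos (S i)); nra).
      assert (HKP : Kc * delta eps <= P).
      { unfold P. apply Rmult_le_compat_r; [lra|].
        replace Kc with (Kc ^ 1) at 1 by (simpl; ring). apply Rle_pow; auto; lia. }
      assert (HKP0 : 0 < Kc * P) by nra.
      replace (Kc ^ S (S i) * delta eps) with (Kc * P) by (unfold P; simpl; ring).
      assert (Hc : forall t, in_horizon T t -> 0 < t -> Rabs (x t (S (S i)) - equil p (S (S i))) = Kc * P ->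
                   - field p (x t) (S (S i)) * (x t (S (S i)) - equil p (S (S i))) > 0).
      { intros t Ht Htp Hy.
        destruct (key (x t) (S (S i))) as [b [f [Hf1 [Hf2 Hf3]]]].
        - apply (region_of _ (Kc * delta eps)); auto. left; apply Hz; auto.
        - lia.
        - replace (S (S i) - 1)%nat with (S i) in Hf3 by lia.
          specialize (Hz t Ht). specialize (IH' t Ht).
          set (a := Rabs (x t 1%nat - equil p 1)) in *.
          set (a2 := Rabs (x t (S i) - equil p (S i))) in *.
          assert (Hfa : Rabs f < 2 * G * P).
          { assert (G * (a + a2) < G * (2 * P)) by (apply Rmult_lt_compat_l; lra). lra. }
          rewrite Hf1.
          set (y := x t (S (S i)) - equil p (S (S i))) in *.
          assert (Hy2 : y * y = Kc * P * (Kc * P)).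
          { rewrite <- Hy. rewrite <- Rabs_mult. rewrite Rabs_pos_eq; [ring| nra]. }
          assert (Hyf : Rabs (y * f) <= Kc * P * Rabs f) by (rewrite Rabs_mult, Hy; lra).
          pose proof (Rle_abs (y*f)).
          assert (b * (y * y) >= beta * (Kc * P * (Kc * P))) by (rewrite Hy2; apply Rle_ge, Rmult_le_compat_r; nra).
          assert (Kc * P * Rabs f <= Kc * P * (2 * G * P)) by (apply Rmult_le_compat_l; nra).
          assert (beta * (Kc * P * (Kc * P)) = Kc * P * ((2 * G + beta) * P)).
          { rewrite <- Kc_beta. ring. }
          assert (Kc * P * (2 * G * P) < Kc * P * ((2 * G + beta) * P)) by (apply Rmult_lt_compat_l; nra).
          replace (- (- b * y + f) * y) with (b * (y * y) - (y * f)) by ring. lra. }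
      apply (bound_horizon (fun s => x s (S (S i)) - equil p (S (S i))) (fun s => field p (x s) (S (S i))) T).
      * intros; eapply ydiff; eauto.
      * apply yrc; auto.
      * assert (Rabs (x 0 (S (S i)) - equil p (S (S i))) < delta eps) by (apply Hn; auto).
        assert (delta eps <= Kc * P) by nra. lra.
      * intros t Ht Htp Hy. assert (HH := Hc t Ht Htp). rewrite Hy in HH.
        rewrite Rabs_pos_eq in HH by nra. specialize (HH eq_refl). nra.
      * intros t Ht Htp Hy. assert (HH := Hc t Ht Htp). rewrite Hy in HH.
        rewrite Rabs_Ropp, Rabs_pos_eq in HH by nra. specialize (HH eq_refl). nra.
Qed.

Lemma reg_all x : is_solution (dim p) (field p) x None ->
  near (dim p) (x 0) (equil p) (delta (A2star p)) -> forall t, 0 <= t -> region (x t).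
Proof.
  intros Hs Hn t Ht. pose proof A2_pos.
  apply (region_of _ (Kc * delta (A2star p))); [|apply Kd_le; auto].
  left. apply (z_bound (A2star p) x None); auto. split; auto.
Qed.

Lemma hor_None t : 1 <= t -> in_horizon None t.
Proof. intros; split; [lra| exact I]. Qed.

Lemma z_conv x : is_solution (dim p) (field p) x None ->
  near (dim p) (x 0) (equil p) (delta (A2star p)) ->
  forall eps, 0 < eps -> exists T0, forall t, T0 <= t -> Rabs (x t 1%nat - equil p 1) < eps.
Proof.
  intros Hs Hn eps He. pose proof beta1_pos. pose proof dim_ge3.
  apply (reach_abs (fun s => x s 1%nat - equil p 1) (fun s => field p (x s) 1) 1 eps (beta1 * eps)); try lra.
  - nra.
  - intros t Ht. eapply ydiff; eauto; [lia| apply hor_None; lra| lra].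
  - intros t Ht Hy. destruct (key1 (x t)) as [b [Hb1 Hb2]]; [apply (reg_all x); auto; lra|].
    rewrite Hb1. nra.
  - intros t Ht Hy. destruct (key1 (x t)) as [b [Hb1 Hb2]]; [apply (reg_all x); auto; lra|].
    rewrite Hb1. nra.
Qed.

Lemma all_conv x : is_solution (dim p) (field p) x None ->
  near (dim p) (x 0) (equil p) (delta (A2star p)) ->
  forall i, (i < dim p)%nat -> forall eps, 0 < eps ->
    exists T0, forall t, T0 <= t -> Rabs (x t i - equil p i) < eps.
Proof.
  intros Hs Hn. pose proof dim_ge3. pose proof G_pos. pose proof beta_pos.
  induction i as [|i IH]; intros Hi eps He.
  - apply (reach_abs (fun s => x s 0%nat - equil p 0) (fun s => field p (x s) 0) 1 eps (ka p * eps)); try lra.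
    + nra.
    + intros t Ht. eapply ydiff; eauto; [apply hor_None; lra| lra].
    + intros t Ht Hy. rewrite field0. nra.
    + intros t Ht Hy. rewrite field0. nra.
  - destruct i as [|i]; [apply z_conv; auto|].
    set (e' := beta * eps / (4 * G)).
    assert (He' : 0 < e') by (unfold e'; apply Rdiv_lt_0_compat; nra).
    destruct (IH ltac:(lia) e' He') as [Ta HTa].
    destruct (z_conv x Hs Hn e' He') as [Tb HTb].
    set (T1 := Rmax 1 (Rmax Ta Tb)).
    assert (HT1 : 1 <= T1 /\ Ta <= T1 /\ Tb <= T1).
    { unfold T1. pose proof (Rmax_l 1 (Rmax Ta Tb)). pose proof (Rmax_r 1 (Rmax Ta Tb)).
      pose proof (Rmax_l Ta Tb). pose proof (Rmax_r Ta Tb). lra. }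
    assert (Hf : forall t, T1 <= t -> exists b f,
      field p (x t) (S (S i)) = - b * (x t (S (S i)) - equil p (S (S i))) + f /\ beta <= b /\
      Rabs f < beta * eps / 2).
    { intros t Ht. destruct (key (x t) (S (S i))) as [b [f [Hf1 [Hf2 Hf3]]]].
      - apply (reg_all x); auto; lra.
      - lia.
      - exists b, f. split; auto. split; auto.
        replace (S (S i) - 1)%nat with (S i) in Hf3 by lia.
        specialize (HTa t ltac:(lra)). specialize (HTb t ltac:(lra)).
        assert (G * (Rabs (x t 1%nat - equil p 1) + Rabs (x t (S i) - equil p (S i))) < G * (2 * e'))
          by (apply Rmult_lt_compat_l; lra).
        assert (G * (2 * e') = beta * eps / 2) by (unfold e'; field; lra). lra. }
    apply (reach_abs (fun s => x s (S (S i)) - equil p (S (S i))) (fun s => field p (x s) (S (S i)))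
             T1 eps (beta * eps / 2)); try lra.
    + assert (0 < beta * eps) by nra. lra.
    + intros t Ht. eapply ydiff; eauto; [apply hor_None; lra| lra].
    + intros t Ht Hy. destruct (Hf t Ht) as [b [f [Hf1 [Hf2 Hf3]]]]. rewrite Hf1.
      pose proof (Rle_abs f). nra.
    + intros t Ht Hy. destruct (Hf t Ht) as [b [f [Hf1 [Hf2 Hf3]]]]. rewrite Hf1.
      pose proof (Rle_abs (-f)). rewrite Rabs_Ropp in *. nra.
Qed.

Lemma equil_ok : is_equilibrium (dim p) (field p) (equil p).
Proof.
  intros i Hi. pose proof A2_pos. pose proof G_pos.
  assert (Hr : region (equil p)) by (unfold region; rewrite eq1, Rminus_diag, Rabs_R0; lra).
  destruct (Nat.eq_dec i 0) as [->|]; [rewrite field0, Rminus_diag; ring|].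
  destruct (Nat.eq_dec i 1) as [->|].
  { destruct (key1 _ Hr) as [b [Hb _]]. rewrite Hb, Rminus_diag. ring. }
  destruct (key (equil p) i Hr ltac:(lia)) as [b [f [Hf1 [_ Hf3]]]].
  rewrite !Rminus_diag, Rabs_R0 in Hf3. rewrite Rplus_0_r, Rmult_0_r in Hf3.
  rewrite Hf1, Rminus_diag.
  assert (f = 0) by (destruct (Req_dec f 0); auto; pose proof (Rabs_pos_lt f H1); lra). subst; ring.
Qed.

Theorem main_thm : is_equilibrium (dim p) (field p) (equil p) /\
  loc_asympt_stable (dim p) (field p) (equil p).
Proof.
  split; [apply equil_ok|]. split.
  - intros eps He. exists (delta eps). split; [apply delta_pos; auto|].
    intros x T Hs Hn t Ht i Hi.
    pose proof (all_bound eps x T He Hs Hn i Hi t Ht).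
    pose proof (delta_le eps i He ltac:(lia)). pose proof (Rmin_l eps (A2star p)). lra.
  - exists (delta (A2star p)). split; [apply delta_pos, A2_pos|].
    intros x Hs Hn i Hi eps He. apply (all_conv x Hs Hn i Hi eps He).
Qed.

End Model.

Theorem proposition5p1 (p : params) :
  0 < ka p -> 0 < kepo p -> 0 < Vmax p -> 0 < KM p -> 0 < V1 p ->
  0 < k23 p -> 0 < k32 p -> 0 < BSL p -> 0 < kin p -> 0 < Smax p ->
  0 < SC50 p -> (0 < NP p)%nat -> 0 < TP p -> (0 < NR p)%nat -> 0 < TR p ->
  Vmax p > kepo p -> Nat.even (NP p) = true ->
  is_equilibrium (dim p) (field p) (equil p) /\
  loc_asympt_stable (dim p) (field p) (equil p).
Proof.
  intros. apply main_thm; auto.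
Qed.
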